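(* Normalize $\operatorname{var}(X)=1$ and $\operatorname{var}(W_1)=I_{d_1}$, and suppose $\operatorname{var}(Y,X,W_1)$ is positive definite. Let $r_X,r_Y,c\in\mathbb R^{d_1}$ and $b\ne\beta_{\text{med}}$. Then $b\in\mathcal B(r_X,r_Y,c)$ if and only if there exists $z\in\mathbb R\setminus\{0\}$ such that $k_1-bk_0=r_Y'\big(z\sqrt{1-\|c\|^2}(\sigma_{W_1,Y}-b\sigma_{W_1,X})-(k_1-bk_0)c\big)$, $z=r_X'\big(\sqrt{1-\|c\|^2}\sigma_{W_1,X}-cz\big)$, $z^2<k_0$, $(b-\beta_{\text{med}})^2<\text{devsq}(z)$, and $\|c\|^2<1$.
   Context: For random vectors $A,B$ with $\operatorname{var}(B)$ invertible, $A^{\perp B}=A-\operatorname{cov}(A,B)\operatorname{var}(B)^{-1}B$. $\sigma_{A,B}=\operatorname{cov}(A,B)$. $\beta_{\text{med}}$ is the coefficient on $X$ in the linear projection of $Y$ on $(1,X,W_1)$. $k_0=\operatorname{var}(X^{\perp W_1})$, $k_1=\operatorname{cov}(Y^{\perp W_1},X^{\perp W_1})$; $\text{devsq}(z)=\frac{\operatorname{var}(Y^{\perp X,W_1})}{k_0}\frac{z^2}{k_0-z^2}$. For $r_X,r_Y,c\in\mathbb R^{d_1}$, $\mathcal B(r_X,r_Y,c)$ is the set of $b\in\mathbb R$ such that for some $(p_1,g_1)\in\mathbb R^{d_1}\times\mathbb R^{d_1}$ (with $\Sigma_{\text{obs}}=\operatorname{var}(W_1)$): $\operatorname{cov}(Y,X)=b\operatorname{var}(X)+g_1'(\Sigma_{\text{obs}}+cr_X'+r_Yc'+r_Yr_X')p_1$;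 $\operatorname{cov}(Y,W_1)=b\operatorname{cov}(X,W_1)+g_1'(\Sigma_{\text{obs}}+r_Yc')$; $\operatorname{cov}(X,W_1)=p_1'(\Sigma_{\text{obs}}+r_Xc')$; $\operatorname{var}(Y)>b^2\operatorname{var}(X)+g_1'(\Sigma_{\text{obs}}+r_Yr_Y'+2r_Yc')g_1+2bg_1'(\Sigma_{\text{obs}}+cr_X'+r_Yc'+r_Yr_X')p_1$; $\operatorname{var}(X)>p_1'(\Sigma_{\text{obs}}+2r_Xc'+r_Xr_X')p_1$; $1>c'\Sigma_{\text{obs}}^{-1}c$. *)

(* Defs.v *)
(* The population second moments of (Y, X, W_1) are represented
   by the entries of their joint covariance matrix. *)
From HB Require Import structures.
From mathcomp Require Import all_boot all_order all_algebra.
Set Implicit Arguments. Unset Strict Implicit. Unset Printing Implicit Defensive.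
Import Order.TTheory GRing.Theory Num.Theory.
Local Open Scope ring_scope.

Section Defs.
Variables (R : rcfType) (d : nat).
(* second moments:
   vY = var(Y), vX = var(X), sYX = cov(Y,X),
   sWY = sigma_{W1,Y} = cov(W1,Y) (column), sWX = sigma_{W1,X} (column),
   SW = var(W1) = Sigma_obs. *)
Variables (vY sYX vX : R) (sWY sWX : 'cV[R]_d) (SW : 'M[R]_d).

Definition sc (A : 'M[R]_1) : R := A ord0 ord0.

Definition jointCov : 'M[R]_(1 + (1 + d)) :=
  block_mx (vY%:M : 'M_1) (row_mx (sYX%:M : 'M_1) sWY^T)
           (col_mx (sYX%:M : 'M_1) sWY)
           (block_mx (vX%:M : 'M_1) sWX^T sWX SW).

Definition posdef n (M : 'M[R]_n) : Prop :=
  forall v : 'cV[R]_n, v != 0 -> 0 < sc (v^T *m M *m v).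

Definition varXW : 'M[R]_(1 + d) := block_mx (vX%:M : 'M_1) sWX^T sWX SW.
Definition covXWY : 'cV[R]_(1 + d) := col_mx (sYX%:M : 'M_1) sWY.

(* coefficient on X in the linear projection of Y on (1, X, W1) *)
Definition beta_med : R :=
  (invmx varXW *m covXWY) (lshift d (ord0 : 'I_1)) ord0.

Definition varYres : R := vY - sc (covXWY^T *m invmx varXW *m covXWY).

Definition k0 : R := vX - sc (sWX^T *m invmx SW *m sWX).
Definition k1 : R := sYX - sc (sWY^T *m invmx SW *m sWX).

Definition devsq (z : R) : R := varYres / k0 * (z ^+ 2 / (k0 - z ^+ 2)).

Definition inB (rX rY c : 'cV[R]_d) (b : R) : Prop :=
  exists p1 g1 : 'cV[R]_d,
  [/\ sYX = b * vX
            + sc (g1^T *m (SW + c *m rX^T + rY *m c^T + rY *m rX^T) *m p1),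
      sWY^T = b *: sWX^T + g1^T *m (SW + rY *m c^T) &
      sWX^T = p1^T *m (SW + rX *m c^T)] /\
  [/\
      b ^+ 2 * vX + sc (g1^T *m (SW + rY *m rY^T + 2%:R *: (rY *m c^T)) *m g1)
        + 2%:R * b * sc (g1^T *m (SW + c *m rX^T + rY *m c^T + rY *m rX^T) *m p1)
        < vY,
      sc (p1^T *m (SW + 2%:R *: (rX *m c^T) + rX *m rX^T) *m p1) < vX &
      sc (c^T *m invmx SW *m c) < 1].
End Defs.

(* Main.v *)
Require Import Defs.
From HB Require Import structures.
From mathcomp Require Import all_boot all_order all_algebra ring lra.
Import Order.TTheory GRing.Theory Num.Theory.
Local Open Scope ring_scope.
Set Implicit Arguments. Unset Strict Implicit. Unset Printing Implicit Defensive.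

Section Helpers.
Variables (R : rcfType) (d : nat).
Implicit Types (x y u w : 'cV[R]_d) (A B : 'M[R]_1).

Definition dot x y : R := sc (x^T *m y).

Lemma scD A B : sc (A + B) = sc A + sc B. Proof. by rewrite /sc mxE. Qed.
Lemma scN A : sc (- A) = - sc A. Proof. by rewrite /sc mxE. Qed.
Lemma scZ (k : R) A : sc (k *: A) = k * sc A. Proof. by rewrite /sc mxE. Qed.
Lemma scM A B : sc (A *m B) = sc A * sc B. Proof. by rewrite /sc mxE big_ord1. Qed.
Lemma scS (k : R) : sc (k%:M) = k. Proof. by rewrite /sc mxE eqxx mulr1n. Qed.
Lemma sc_inj A B : sc A = sc B -> A = B.
Proof. by move=> h; rewrite (mx11_scalar A) (mx11_scalar B); congr (_%:M). Qed.
Lemma scT A : sc (A^T) = sc A. Proof. by rewrite /sc mxE. Qed.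
Lemma scdot x y : sc (x^T *m y) = dot x y. Proof. by []. Qed.
Lemma dotM x y : x^T *m y = (dot x y)%:M. Proof. exact: mx11_scalar. Qed.

Lemma dotC x y : dot x y = dot y x.
Proof. by rewrite /dot -scT trmx_mul trmxK. Qed.
Lemma dotDl x y w : dot (x + y) w = dot x w + dot y w.
Proof. by rewrite /dot linearD mulmxDl scD. Qed.
Lemma dotDr x y w : dot w (x + y) = dot w x + dot w y.
Proof. by rewrite /dot mulmxDr scD. Qed.
Lemma dotNl x y : dot (- x) y = - dot x y.
Proof. by rewrite /dot linearN mulNmx scN. Qed.
Lemma dotNr x y : dot y (- x) = - dot y x.
Proof. by rewrite /dot mulmxN scN. Qed.
Lemma dotZl (k : R) x y : dot (k *: x) y = k * dot x y.
Proof. by rewrite /dot linearZ /= -scalemxAl scZ. Qed.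
Lemma dotZr (k : R) x y : dot y (k *: x) = k * dot y x.
Proof. by rewrite /dot -scalemxAr scZ. Qed.

Lemma qD x y (M N : 'M[R]_d) : sc (x^T *m (M + N) *m y) = sc (x^T *m M *m y) + sc (x^T *m N *m y).
Proof. by rewrite mulmxDr mulmxDl scD. Qed.
Lemma q1 x y : sc (x^T *m 1%:M *m y) = dot x y. Proof. by rewrite mulmx1. Qed.
Lemma qO x y u w : sc (x^T *m (u *m w^T) *m y) = dot x u * dot w y.
Proof. by rewrite mulmxA -(mulmxA _ w^T) scM. Qed.
Lemma qZ x y (k : R) (M : 'M[R]_d) : sc (x^T *m (k *: M) *m y) = k * sc (x^T *m M *m y).
Proof. by rewrite -scalemxAr -scalemxAl scZ. Qed.

Lemma L1 x u w : x^T *m (1%:M + u *m w^T) = (x + dot x u *: w)^T.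
Proof. by rewrite mulmxDr mulmx1 mulmxA dotM mul_scalar_mx linearD linearZ. Qed.

Lemma k0pos vY sYX (s a : 'cV[R]_d) :
  posdef (jointCov vY sYX 1 s a 1%:M) -> 0 < 1 - dot a a.
Proof.
move=> P.
have := P (col_mx (0 : 'cV[R]_1) (col_mx (1%:M : 'cV[R]_1) (- a))).
rewrite col_mx_eq0 eqxx /= col_mx_eq0 andbC.
have -> : ((1%:M : 'cV[R]_1) == 0) = false.
  apply/negbTE/eqP => h; have := congr1 (fun M : 'M[R]_1 => M ord0 ord0) h.
  by rewrite !mxE eqxx /= mulr1n; apply/eqP; exact: oner_neq0.
rewrite andbF => /(_ isT).
rewrite /jointCov !tr_col_mx tr_scalar_mx linear0 linearN /=.
rewrite !(mul_row_block, mul_row_col, mul0mx, mulmx0, add0r, addr0, mul1mx, mulmx1).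
by rewrite subrr mul0mx addr0 scD scS mulNmx scN.
Qed.
Lemma invq sYX (s a : 'cV[R]_d) : 0 < 1 - dot a a ->
  invmx (varXW 1 a 1%:M) *m covXWY sYX s =
  col_mx (((sYX - dot s a) / (1 - dot a a))%:M) (s - ((sYX - dot s a) / (1 - dot a a)) *: a).
Proof.
move=> kp; have kn : 1 - dot a a != 0 by rewrite gt_eqF.
have kn0 := kn.
have [k ek] : {k : R | k = 1 - dot a a} by eexists.
have [bt ebt] : {b : R | b = (sYX - dot s a) / k} by eexists.
rewrite -ek in kp kn *; rewrite -ebt.
pose M : 'M[R]_(1 + d) := block_mx (k^-1)%:M (- (k^-1 *: a^T)) (- (k^-1 *: a))
   (1%:M + k^-1 *: (a *m a^T)).
have MV : M *m varXW 1 a 1%:M = 1%:M.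
  rewrite /M /varXW mulmx_block [RHS]scalar_mx_block; congr block_mx.
  - apply: sc_inj; rewrite scD scM !scS mulNmx scN -scalemxAl scZ scdot.
    by rewrite ek; field; exact: kn0.
  - by rewrite mul_scalar_mx mulNmx mulmx1 addrN.
  - rewrite mulNmx mulmx1 mulmxDl mul1mx -scalemxAl -mulmxA dotM mul_mx_scalar.
    apply/matrixP => i j; rewrite !mxE ek; field; exact: kn0.
  - by rewrite mulNmx mulmx1 -scalemxAl addrCA addNr addr0.
have [_ Vu] := mulmx1_unit MV.
have -> : covXWY sYX s = varXW 1 a 1%:M *m col_mx (bt%:M) (s - bt *: a).
  rewrite /varXW /covXWY mul_block_col; congr col_mx.
  - apply: sc_inj; rewrite scD scM !scS mulmxDr scD scdot mulmxN scN -scalemxAr scZ scdot.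
    by rewrite (dotC a s) ebt ek; field; exact: kn0.
  - by rewrite mul_mx_scalar mul1mx addrC subrK.
by rewrite mulKmx.
Qed.
Lemma beta_val sYX (s a : 'cV[R]_d) : 0 < 1 - dot a a ->
  beta_med sYX 1 s a 1%:M = (sYX - dot s a) / (1 - dot a a).
Proof. by move=> kp; rewrite /beta_med invq // col_mxEu mxE eqxx mulr1n. Qed.

Lemma varY_val vY sYX (s a : 'cV[R]_d) : 0 < 1 - dot a a ->
  varYres vY sYX 1 s a 1%:M =
  (vY - dot s s) - (sYX - dot s a) / (1 - dot a a) * (sYX - dot s a).
Proof.
move=> kp; rewrite /varYres -mulmxA invq // /covXWY tr_col_mx tr_scalar_mx.
rewrite mul_row_col scD scM !scS scdot dotDr dotNr dotZr.
have kn : 1 - dot a a != 0 by rewrite gt_eqF.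
field; exact: kn.
Qed.

Lemma k0_val (a : 'cV[R]_d) : k0 1 a 1%:M = 1 - dot a a.
Proof. by rewrite /k0 invmx1 q1. Qed.
Lemma k1_val sYX (s a : 'cV[R]_d) : k1 sYX s a 1%:M = sYX - dot s a.
Proof. by rewrite /k1 invmx1 q1. Qed.
End Helpers.

Lemma key (R : rcfType) (k0 k1 b z w Q : R) : 0 < k0 -> 0 < k0 - z ^+ 2 -> z != 0 ->
  k1 - b * k0 = z * w ->
  ((b - k1 / k0) ^+ 2 < (Q - k1 / k0 * k1) / k0 * (z ^+ 2 / (k0 - z ^+ 2)))
  = (w ^+ 2 < Q + b ^+ 2 * k0 - 2%:R * b * k1).
Proof.
move=> k0p kzp zn E.
have k0n : k0 != 0 by rewrite gt_eqF.
have kzn : k0 - z ^+ 2 != 0 by rewrite gt_eqF.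
have -> : k1 = b * k0 + z * w by rewrite -E; ring.
rewrite -subr_gt0 -[RHS]subr_gt0.
have -> : (Q - (b * k0 + z * w) / k0 * (b * k0 + z * w)) / k0 * (z ^+ 2 / (k0 - z ^+ 2))
   - (b - (b * k0 + z * w) / k0) ^+ 2
   = z ^+ 2 / (k0 * (k0 - z ^+ 2)) *
     (Q + b ^+ 2 * k0 - 2%:R * b * (b * k0 + z * w) - w ^+ 2).
  by field; rewrite k0n kzn.
have z2 : 0 < z ^+ 2 by rewrite lt_def sqrf_eq0 zn sqr_ge0.
by rewrite pmulr_rgt0 // divr_gt0 // mulr_gt0.
Qed.

Ltac nd x1 x2 x3 x4 x5 := rewrite ?(dotC x2 x1) ?(dotC x3 x1) ?(dotC x4 x1) ?(dotC x5 x1)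
  ?(dotC x3 x2) ?(dotC x4 x2) ?(dotC x5 x2) ?(dotC x4 x3) ?(dotC x5 x3) ?(dotC x5 x4).
Ltac ndin x1 x2 x3 x4 x5 H := rewrite ?(dotC x2 x1) ?(dotC x3 x1) ?(dotC x4 x1) ?(dotC x5 x1)
  ?(dotC x3 x2) ?(dotC x4 x2) ?(dotC x5 x2) ?(dotC x4 x3) ?(dotC x5 x3) ?(dotC x5 x4) in H.
Ltac expd := rewrite ?(dotDl, dotDr, dotZl, dotZr, dotNl, dotNr).

Theorem mainTheorem17 (R : rcfType) (d : nat)
    (vY sYX vX : R) (sWY sWX : 'cV[R]_d) (SW : 'M[R]_d)
    (rX rY c : 'cV[R]_d) (b : R) :
  vX = 1 ->
  SW = 1%:M ->
  posdef (jointCov vY sYX vX sWY sWX SW) ->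
  b != beta_med sYX vX sWY sWX SW ->
  inB vY sYX vX sWY sWX SW rX rY c b <->
  exists z : R,
    z != 0 /\
    [/\
        k1 sYX sWY sWX SW - b * k0 vX sWX SW =
          sc (rY^T *m ((z * Num.sqrt (1 - sc (c^T *m c))) *: (sWY - b *: sWX)
                 - (k1 sYX sWY sWX SW - b * k0 vX sWX SW) *: c)),
        z = sc (rX^T *m (Num.sqrt (1 - sc (c^T *m c)) *: sWX - z *: c)),
        z ^+ 2 < k0 vX sWX SW,
        (b - beta_med sYX vX sWY sWX SW) ^+ 2
          < devsq vY sYX vX sWY sWX SW z &
        sc (c^T *m c) < 1].
Proof.
move=> -> -> P bne.
have kp := k0pos P.
rewrite beta_val // in bne.
rewrite /devsq varY_val // beta_val // k0_val k1_val !scdot.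
have [S eS] : {S : R | S = Num.sqrt (1 - dot c c)} by eexists.
rewrite -eS.
split.
- case=> p [g [[H1 H2 H3] [H4 H5 H6]]].
  rewrite invmx1 q1 in H6.
  rewrite L1 in H3; have Ha := trmx_inj H3.
  rewrite L1 in H2.
  have Hs : sWY = b *: sWX + (g + dot g rY *: c).
    by rewrite -[sWY]trmxK H2 linearD linearZ /= !trmxK.
  rewrite !qD !qZ !q1 !qO in H1 H4 H5.
  ndin p g c rX rY H1; ndin p g c rX rY H4; ndin p g c rX rY H5.
  have SS : S ^+ 2 = 1 - dot c c by rewrite eS sqr_sqrtr // subr_ge0 ltW.
  have Sp : 0 < S by rewrite eS sqrtr_gt0 subr_gt0.
  have E1 : sYX - dot sWY sWX - b * (1 - dot sWX sWX) = (dot p rX * S) * (dot g rY * S).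
    have -> : (dot p rX * S) * (dot g rY * S) = dot p rX * dot g rY * S ^+ 2 by ring.
    rewrite SS H1 Hs Ha; expd; nd p g c rX rY; ring.
  exists (dot p rX * S); split.
    apply/negP => /eqP z0; move: E1; rewrite z0 mul0r => /eqP; rewrite subr_eq0 => /eqP e.
    by move: bne; rewrite e mulfK ?eqxx // gt_eqF.
  have E3 : (dot p rX * S) ^+ 2 < 1 - dot sWX sWX.
    rewrite exprMn SS Ha; expd; nd p g c rX rY; lra.
  split.
  + rewrite E1 Hs -/(dot rY _); expd; nd p g c rX rY.
    have -> : dot p rX * S * S = dot p rX * S ^+ 2 by ring.
    ring.
  + rewrite Ha -/(dot rX _); expd; nd p g c rX rY; ring.
  + exact: E3.
  + rewrite (key _ kp _ _ E1) ?subr_gt0 //.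
      rewrite exprMn SS Hs Ha; expd; nd p g c rX rY; rewrite H1; lra.
    apply/negP => /eqP z0; move: E1; rewrite z0 mul0r => /eqP; rewrite subr_eq0 => /eqP e.
    by move: bne; rewrite e mulfK ?eqxx // gt_eqF.
  + exact: H6.
- case=> z [zn [E1 E2 E3 E4 E5]].
  rewrite -/(dot rY _) in E1; rewrite -/(dot rX _) in E2.
  have SS : S ^+ 2 = 1 - dot c c by rewrite eS sqr_sqrtr // subr_ge0 ltW.
  have Sp : 0 < S by rewrite eS sqrtr_gt0 subr_gt0.
  have Sn : S != 0 by rewrite gt_eqF.
  have [u uS] : {u : R | u * S = z} by exists (z / S); rewrite divfK.
  have [v vS] : {v : R | z * (v * S) = sYX - dot sWY sWX - b * (1 - dot sWX sWX)}.
    by exists ((sYX - dot sWY sWX - b * (1 - dot sWX sWX)) / z / S); rewrite divfK // mulrC divfK.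
  have zSn : z * S != 0 by rewrite mulf_neq0.
  rewrite (key _ kp _ _ (esym vS)) ?subr_gt0 // in E4.
  rewrite -vS -uS in E1; rewrite -uS in E2 E3.
  have pu : dot (sWX - u *: c) rX = u.
    apply: (mulIf Sn); move: E2; expd; nd sWX sWY c rX rY => E2; lra.
  have gv : dot (sWY - b *: sWX - v *: c) rY = v.
    apply: (mulIf zSn); move: E1; rewrite -uS; expd; nd sWX sWY c rX rY => E1; lra.
  have Ev : u * S * (v * S) = u * v * S ^+ 2 by ring.
  have vS2 := vS; rewrite -uS Ev SS in vS2.
  exists (sWX - u *: c), (sWY - b *: sWX - v *: c); split; split.
  + rewrite !qD !q1 !qO (dotC rX (sWX - u *: c)) gv pu.
    move: vS2; expd; nd sWX sWY c rX rY => vS'; lra.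
  + by rewrite L1 gv subrK linearD linearN linearZ /= addrC subrK.
  + by rewrite L1 pu subrK.
  + rewrite !qD !qZ !q1 !qO (dotC rX (sWX - u *: c)) (dotC rY (sWY - b *: sWX - v *: c)) gv pu.
    rewrite exprMn SS in E4; move: vS2 E4; expd; nd sWX sWY c rX rY => vS' E4'; have vSb := congr1 (fun t => b * t) vS'; simpl in vSb; lra.
  + rewrite !qD !qZ !q1 !qO (dotC rX (sWX - u *: c)) pu.
    rewrite exprMn SS in E3; move: E3; expd; nd sWX sWY c rX rY => E3'; lra.
  + by rewrite invmx1 q1.
Qed.
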